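(* Let $k$ be a positive integer and let $T$ be a semi-complete digraph with $n$ vertices that admits an ordering $(v_1,\dots,v_n)$ of its vertices of width at most $k$. Let $T'$ be the transitive tournament on the same vertex set with $(v_i,v_j)\in E(T')$ iff $i<j$. Then every $k$-cut of $T$ is a $2k(1+\ln 2k)$-cut of $T'$.
   Context: A simple digraph (no loops, no multiple arcs) $T$ is semi-complete if for every pair of distinct vertices $v,w$ at least one of $(v,w),(w,v)$ is an arc. The width of an ordering $(v_1,\dots,v_n)$ of $V(T)$ is $\max_{1\le t\le n-1}|E(\{v_{t+1},\dots,v_n\},\{v_1,\dots,v_t\})|$, where $E(A,B)$ is the set of arcs with tail in $A$ and head in $B$. A $d$-cut of a digraph $T$ (for a real $d\ge0$) is an ordered partition $(X,Y)$ of $V(T)$ (either part may be empty) such that there are at most $d$ arcs $(u,v)\in E(T)$ with $u\in Y$ and $v\in X$. *)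

(* Defs.v *)
From mathcomp Require Import all_boot.
From Stdlib Require Import Reals.
Set Implicit Arguments. Unset Strict Implicit. Unset Printing Implicit Defensive.

(* A digraph on a finite vertex type V is an arc relation E : rel V
   (multiple arcs are impossible); simple = no loops. *)
Definition simple_digraph (V : finType) (E : rel V) : Prop :=
  forall v, ~~ E v v.

Definition semi_complete (V : finType) (E : rel V) : Prop :=
  simple_digraph E /\ forall v w : V, v != w -> E v w || E w v.

Definition arcs_from (V : finType) (E : rel V) (A B : {set V}) : {set V * V} :=
  [set p : V * V | [&& E p.1 p.2, p.1 \in A & p.2 \in B]].

Definition is_ordering (V : finType) (s : seq V) : Prop := perm_eq s (enum V).

Definition width (V : finType) (E : rel V) (s : seq V) : nat :=
  \max_(1 <= t < size s)
     #|arcs_from E [set x in drop t s] [set x in take t s]|.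

Definition trans_tournament (V : eqType) (s : seq V) : rel V :=
  fun u v => index u s < index v s.

Definition is_dcut (V : finType) (E : rel V) (X Y : {set V}) (d : R) : Prop :=
  [/\ [disjoint X & Y], X :|: Y = setT &
      (INR #|arcs_from E Y X| <= d)%R].

(* Main.v *)
Require Import Defs.
From mathcomp Require Import all_boot.
From Stdlib Require Import Reals Lra.
Module Aux2.
Import ssrnat.

Fixpoint Hr (m : nat) : R := match m with 0 => 0%R | S p => (Hr p + / INR (S p))%R end.
Fixpoint S2 (a m : nat) : nat := match m with 0 => 0 | S p => S2 a p + a %/ (S p) end.

Lemma ln_le_sub1 (u : R) : (0 < u)%R -> (ln u <= u - 1)%R.
Proof.
move=> hu.
have h := exp_ineq1_le (u - 1).
have -> : (u - 1 = ln (exp (u - 1)))%R by rewrite ln_exp.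
destruct (Rle_lt_or_eq_dec _ _ h) as [h1|h1].
- left; apply: ln_increasing => //; lra.
- right; rewrite -h1; f_equal; lra.
Qed.

Lemma Hr_le m : 1 <= m -> (Hr m <= 1 + ln (INR m))%R.
Proof.
elim: m => [//|m IH] _.
case: m IH => [|m] IH.
  rewrite /= ln_1; lra.
have {}IH := IH isT.
change (Hr m.+2) with (Hr m.+1 + / INR m.+2)%R.
set a := INR m.+1. set b := INR m.+2.
have ha : (0 < a)%R by apply: lt_0_INR; apply/ltP.
have hb : b = (a + 1)%R by rewrite /b /a S_INR.
have hl : ln a = (ln b + ln (a / b))%R.
  rewrite -ln_mult; [|lra|apply: Rdiv_lt_0_compat; lra].
  f_equal; field; lra.
have hu := ln_le_sub1 (a / b) ltac:(apply: Rdiv_lt_0_compat; lra).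
have : (a / b - 1 = - / b)%R by rewrite hb; field; lra.
move=> e; rewrite -/a in IH; set q := (a / b)%R in e hu hl; set ib := (/ b)%R in e *; lra.
Qed.

Lemma INR_div_le a q : 0 < q -> (INR (a %/ q) <= INR a / INR q)%R.
Proof.
move=> hq.
have hq' : (0 < INR q)%R by apply: lt_0_INR; apply/ltP.
apply Rmult_le_reg_r with (INR q) => //.
have -> : (INR a / INR q * INR q = INR a)%R by field; lra.
rewrite -mult_INR; apply: le_INR; apply/leP; rewrite multE; exact: leq_divM.
Qed.

Lemma S2_le a m : (INR (S2 a m) <= INR a * Hr m)%R.
Proof.
elim: m => [|m IH] /=; first by rewrite Rmult_0_r; right.
rewrite -plusE plus_INR Rmult_plus_distr_l.
apply: Rplus_le_compat => //.
exact: (INR_div_le a m.+1 isT).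
Qed.

Lemma S2_mono a m n : m <= n -> S2 a m <= S2 a n.
Proof.
elim: n => [|n IH]; first by rewrite leqn0 => /eqP ->.
rewrite leq_eqVlt => /orP [/eqP -> //|]; rewrite ltnS => /IH h /=.
exact: leq_trans h (leq_addr _ _).
Qed.

Lemma S2_stable a m : a <= m -> S2 a m = S2 a a.
Proof.
elim: m => [|m IH]; first by rewrite leqn0 => /eqP ->.
rewrite leq_eqVlt => /orP [/eqP -> //|]; rewrite ltnS => h /=.
by rewrite divn_small ?ltnS // addn0 IH.
Qed.

Lemma S2_bound a m : S2 a m <= S2 a a.
Proof. case: (leqP a m) => h; [by rewrite S2_stable | exact: S2_mono (ltnW h)]. Qed.

Lemma sum_iota_S2 a N : \sum_(r <- iota 1 N) (a %/ r) = S2 a N.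
Proof.
elim: N => [|N IH]; first by rewrite big_nil.
have -> : iota 1 N.+1 = iota 1 N ++ [:: N.+1] by rewrite -[N.+1]addn1 iotaD addnC.
by rewrite big_cat big_seq1 IH.
Qed.

Lemma final_real k N : 0 < k ->
  (INR (S2 (2 * k) N) <= 2 * INR k * (1 + ln (2 * INR k)))%R.
Proof.
move=> hk.
apply: Rle_trans (_ : INR (S2 (2*k) (2*k)) <= _)%R.
  by apply: le_INR; apply/leP; apply: S2_bound.
have e : INR (2 * k) = (2 * INR k)%R by rewrite -multE mult_INR.
apply: Rle_trans (S2_le _ _) _.
rewrite e; apply: Rmult_le_compat_l.
  have := pos_INR k; lra.
rewrite -e; apply: Hr_le; by rewrite muln_gt0.
Qed.


Lemma sum_inj (V : finType) (X : {set V}) (d : V -> nat) a N :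
  {in X &, injective d} -> (forall x, x \in X -> 1 <= d x <= N) ->
  \sum_(x in X) (a %/ d x) <= S2 a N.
Proof.
move=> hinj hb.
rewrite -sum_iota_S2 -big_enum /= -(big_map d xpredT (fun r => a %/ r)).
apply: (uniq_sub_le_big (le := leq)) => //.
- by move=> x y; apply: leq_addr.
- rewrite map_inj_in_uniq ?enum_uniq // => x y; rewrite !mem_enum; exact: hinj.
- exact: iota_uniq.
- move=> r /mapP [x hx ->]; rewrite mem_enum in hx.
  by have /andP [h1 h2] := hb x hx; rewrite mem_iota h1 add1n ltnS.
Qed.

Lemma in_drop_uniq (T:eqType) (s:seq T) x t : uniq s -> x \in s ->
  (x \in drop t s) = ~~ (x \in take t s).
Proof.
move=> us xs. have : x \in take t s ++ drop t s by rewrite cat_take_drop.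
rewrite mem_cat.
move: us; rewrite -{1}(cat_take_drop t s) cat_uniq => /and3P [_ hd _].
case ht: (x \in take t s) => /= h; last by rewrite h.
apply/negP => hx; move/negP: hd; apply; apply/hasP; by exists x.
Qed.

Lemma comb (V : finType) (E : rel V) k s (X Y : {set V}) :
  semi_complete E -> is_ordering s -> width E s <= k -> [disjoint X & Y] ->
  #|arcs_from E Y X| <= k ->
  #|arcs_from (trans_tournament s) Y X| <= S2 (2 * k) #|V|.
Proof.
move=> [_ hsc] hs hw hdis hk.
have us : uniq s by rewrite (perm_uniq hs) enum_uniq.
have ins : forall v, v \in s by move=> v; rewrite (perm_mem hs) mem_enum.
set idx := fun v => index v s.
have idx_inj : forall u v, idx u = idx v -> u = v.
  move=> u v e; by rewrite -(nth_index u (ins u)) -(nth_index u (ins v)) /idx -/(idx u) e.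
have idx_lt : forall v, idx v < size s by move=> v; rewrite index_mem.
pose Yx x := [set y in Y | idx y < idx x].
pose Dx x := [set x' in X | idx x <= idx x'].
have cd : forall x, #|Yx x| * #|Dx x| <= 2 * k.
  move=> x.
  case t0: (idx x == 0).
    suff -> : Yx x = set0 by rewrite cards0.
    apply/setP => y; rewrite !inE (eqP t0) ltn0 andbF //.
  set t := idx x.
  set B := arcs_from E [set z in drop t s] [set z in take t s].
  have hB : #|B| <= k.
    apply: leq_trans hw.
    have := @leq_bigmax_seq _ (index_iota 1 (size s)) xpredT
      (fun t => #|arcs_from E [set x in drop t s] [set x in take t s]|) t.
    rewrite mem_index_iota lt0n t0 idx_lt; by apply.
  rewrite -cardsX.
  apply: leq_trans (_ : #|arcs_from E Y X :|: [set (p.2, p.1) | p in B]| <= _).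
    apply/subset_leq_card/subsetP => -[y x']; rewrite inE /= !inE => /andP [/andP [hy hyx] /andP [hx' hxx']].
    have hne : y != x'.
      apply/negP => /eqP e; move: hyx; rewrite e => h.
      by move: (leq_trans h hxx'); rewrite ltnn.
    case/orP: (hsc _ _ hne) => he.
      by rewrite /= he hy hx'.
    apply/orP; right; apply/imsetP; exists (x', y) => //.
    rewrite inE /= he !inE in_drop_uniq // (in_take _ (ins _)) (in_take _ (ins _)).
    by rewrite -/(idx x') -/(idx y) -/t -leqNgt hxx' hyx.
  apply: leq_trans (leq_card_setU _ _) _.
  rewrite mul2n -addnn; apply: leq_add => //.
  exact: leq_trans (leq_imset_card _ _) hB.
have step2 : #|arcs_from (trans_tournament s) Y X| <= \sum_(x in X) #|Yx x|.
  rewrite -sum1_card (partition_big (fun p : V * V => p.2) (mem X)) /=; last first.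
    by move=> [y x]; rewrite inE /= => /and3P [].
  apply: leq_sum => j hj.
  rewrite big_mkcond /= (_ : #|Yx j| = #|setX (Yx j) [set j]|); last by rewrite cardsX cards1 muln1.
  rewrite -sum1_card big_mkcond /=.
  rewrite [X in _ <= X]big_mkcond /=; apply: leq_sum => -[y x] _.
  case h: (_ && _) => //.
  move: h; rewrite !inE /= => /andP [/and3P [hlt hy hx] /eqP ej].
  by rewrite ej in hlt *; rewrite hy eqxx /= [idx y < idx j]hlt.
apply: leq_trans step2 _.
apply: leq_trans (_ : \sum_(x in X) ((2 * k) %/ #|Dx x|) <= _).
  apply: leq_sum => x hx.
  have hd : 0 < #|Dx x| by apply/card_gt0P; exists x; rewrite inE hx leqnn.
  by rewrite leq_divRL.
apply: sum_inj.
  have lt : forall x1 x2, x1 \in X -> idx x1 < idx x2 -> #|Dx x2| < #|Dx x1|.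
    move=> x1 x2 hx1 h12; apply: proper_card; apply/properP; split.
      apply/subsetP => z; rewrite !inE => /andP [-> h]; exact: leq_trans (ltnW h12) h.
    exists x1; first by rewrite inE hx1 leqnn.
    by rewrite inE hx1 /= -ltnNge.
  move=> x1 x2 hx1 hx2 e; case: (ltngtP (idx x1) (idx x2)) => h.
  - by have := lt _ _ hx1 h; rewrite e ltnn.
  - by have := lt _ _ hx2 h; rewrite e ltnn.
  - exact: idx_inj.
move=> x hx; apply/andP; split.
  by apply/card_gt0P; exists x; rewrite inE hx leqnn.
exact: max_card.
Qed.
End Aux2.


Theorem mainTheorem11 (V : finType) (E : rel V) (k : nat) (s : seq V) :
  0 < k ->
  semi_complete E ->
  is_ordering s ->
  width E s <= k ->
  forall X Y : {set V},
    is_dcut E X Y (INR k) ->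
    is_dcut (trans_tournament s) X Y
      (2 * INR k * (1 + ln (2 * INR k)))%R.
Proof.
move=> hk hsc hs hw X Y [hdis hU hc]; split => //.
have hc' : #|arcs_from E Y X| <= k by apply/leP; apply: INR_le.
apply: Rle_trans (_ : INR (Aux2.S2 (muln 2 k) #|V|) <= _)%R.
  apply: le_INR; exact: (elimT leP (Aux2.comb _ _ _ _ _ _ hsc hs hw hdis hc')).
exact: Aux2.final_real.
Qed.
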